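(* Let $P\ge 2$ be an integer. Let $\omega_1,\dots,\omega_P$ be pairwise distinct nonzero real numbers, let $\beta_1,\dots,\beta_P$ be nonzero real numbers, and let $\kappa_1,\dots,\kappa_P$ be pairwise distinct nonzero real numbers such that $1-\kappa_i\omega_j\neq 0$ for all $i,j\in\{1,\dots,P\}$. (a) Let $A=(a_{ij})_{i,j=1}^{P}$ with $a_{ij}=\dfrac{\kappa_i\beta_j}{1-\kappa_i\omega_j}$. Then $A$ is invertible and $A^{-1}=(\tilde a_{ij})_{i,j=1}^P$ with $$\tilde a_{ij}=\frac{1-\kappa_j\omega_i}{\beta_i\,\kappa_j}\;\prod_{\substack{k=1\\k\neq j}}^{P}\frac{1-\kappa_k\omega_i}{\kappa_k-\kappa_j}\;\prod_{\substack{l=1\\l\neq i}}^{P}\frac{1-\kappa_j\omega_l}{\omega_l-\omega_i}.$$ (b) Let $B=(b_{ij})_{i,j=1}^{P-1}$ with $b_{ij}=\dfrac{1-\omega_j/\omega_P}{1-\kappa_i\omega_j}$. Then $B$ is invertible and $B^{-1}=(\tilde b_{ij})_{i,j=1}^{P-1}$ with $$\tilde b_{ij}=\frac{\omega_P\,(1-\kappa_j\omega_i)}{1-\kappa_j\omega_P}\;\prod_{\substack{k=1\\k\neq j}}^{P-1}\frac{1-\kappa_k\omega_i}{\kappa_k-\kappa_j}\;\prod_{\substack{l=1\\l\neq i}}^{P}\frac{1-\kappa_j\omega_l}{\omega_l-\omega_i}.$$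
   Context: In the paper, $\omega_i$ are the weights of a $P$-level Scheduled Relaxation Jacobi scheme, $\beta_i$ their relative frequencies, $\kappa_1,\dots,\kappa_{P-1}$ the interior local maxima of the per-iteration amplification factor and $\kappa_P$ is set equal to the upper endpoint $\kappa_M=2$. In products, each factor appears once unless it depends on the product index. *)

(* Defs.v *)
From mathcomp Require Import all_boot all_order all_algebra.
Set Implicit Arguments. Unset Strict Implicit. Unset Printing Implicit Defensive.
Import Order.TTheory GRing.Theory Num.Theory.
Local Open Scope ring_scope.

(* Indices are 0-based: the paper's index i in {1..P} is i-1 here.
   omega, beta, kappa : nat -> R, only values at 0..P-1 matter. *)

Definition matA (R : fieldType) (P : nat) (om be ka : nat -> R) : 'M[R]_P :=
  \matrix_(i < P, j < P) (ka i * be j / (1 - ka i * om j)).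

Definition invA (R : fieldType) (P : nat) (om be ka : nat -> R) : 'M[R]_P :=
  \matrix_(i < P, j < P)
    ((1 - ka j * om i) / (be i * ka j)
     * (\prod_(k < P | k != j :> nat) ((1 - ka k * om i) / (ka k - ka j)))
     * (\prod_(l < P | l != i :> nat) ((1 - ka j * om l) / (om l - om i)))).

Definition matB (R : fieldType) (P : nat) (om ka : nat -> R) : 'M[R]_P.-1 :=
  \matrix_(i < P.-1, j < P.-1) ((1 - om j / om P.-1) / (1 - ka i * om j)).

Definition invB (R : fieldType) (P : nat) (om ka : nat -> R) : 'M[R]_P.-1 :=
  \matrix_(i < P.-1, j < P.-1)
    (om P.-1 * (1 - ka j * om i) / (1 - ka j * om P.-1)
     * (\prod_(k < P.-1 | k != j :> nat) ((1 - ka k * om i) / (ka k - ka j)))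
     * (\prod_(l < P | l != i :> nat) ((1 - ka j * om l) / (om l - om i)))).

Arguments matA {R} P om be ka.
Arguments invA {R} P om be ka.
Arguments matB {R} P om ka.
Arguments invB {R} P om ka.

(* Main.v *)
From mathcomp Require Import all_boot all_order all_algebra.
From mathcomp Require Import zify ring.
Set Implicit Arguments. Unset Strict Implicit. Unset Printing Implicit Defensive.
Import Order.TTheory GRing.Theory Num.Theory.
Local Open Scope ring_scope.
Require Import Defs.
Section S.
Variable R : fieldType.

Lemma card_neq (n : nat) (j : 'I_n) : #|[pred m : 'I_n | m != j :> nat]| = n.-1.
Proof.
have -> : #|[pred m : 'I_n | m != j :> nat]| = #|predC1 j|.
  by apply: eq_card => m; rewrite !inE val_eqE.
by rewrite cardC1 card_ord.
Qed.

Lemma prod_const_neq (n : nat) (j : 'I_n) (c : R) :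
  \prod_(m < n | m != j :> nat) c = c ^+ n.-1.
Proof. by rewrite -(card_neq j) -prodr_const. Qed.

Lemma lag (n : nat) (x : nat -> R) :
  (forall i j, (i < n)%N -> (j < n)%N -> i <> j -> x i <> x j) ->
  forall (p : {poly R}), (size p <= n)%N -> forall z,
  p.[z] = \sum_(k < n) p.[x k] * \prod_(l < n | l != k :> nat) ((z - x l) / (x k - x l)).
Proof.
move=> hx p sp z.
pose q := p - \sum_(k < n) p.[x k]%:P *
   \prod_(l < n | l != k :> nat) (((x k - x l)^-1)%:P * ('X - (x l)%:P)).
have hq : q = 0.
  apply: (@roots_geq_poly_eq0 _ q [seq x (val i) | i <- enum 'I_n]).
  - apply/allP => _ /mapP [i _ ->].
    rewrite /root /q hornerD hornerN horner_sum (bigD1 i) //= [\sum_(j < n | j != i) _]big1.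
      rewrite addr0 hornerM hornerC horner_prod.
      rewrite big1 ?mulr1 ?subrr //.
      move=> l hl; rewrite hornerM hornerC hornerXsubC mulVf //.
      rewrite subr_eq0; apply/eqP; apply: hx => //; apply/eqP; by rewrite eq_sym.
    move=> k hk; rewrite hornerM hornerC horner_prod (bigD1 i) /=.
      by rewrite hornerM hornerC hornerXsubC subrr mulr0 mul0r mulr0.
    by rewrite val_eqE eq_sym.
  - rewrite map_inj_in_uniq ?enum_uniq //.
    move=> a b _ _ /= h; apply/val_inj/eqP; apply/negPn/negP => hne.
    by apply: (hx a b) => //; apply/eqP.
  - rewrite size_map size_enum_ord.
    rewrite /q (leq_trans (size_add _ _)) // size_opp geq_max sp /=.
    rewrite (leq_trans (size_sum _ _ _)) //.
    apply/bigmax_leqP => k _.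
    rewrite (leq_trans (size_mul_leq _ _)) //.
    rewrite size_polyC.
    rewrite size_prod; last first.
      move=> l hl; rewrite mulf_eq0 polyXsubC_eq0 orbF polyC_eq0 invr_eq0 subr_eq0.
      apply/eqP; apply: hx => //; apply/eqP; by rewrite eq_sym.
    rewrite (eq_bigr (fun=> 2%N)); last first.
      move=> l hl; rewrite size_Cmul ?size_XsubC // invr_eq0 subr_eq0.
      apply/eqP; apply: hx => //; apply/eqP; by rewrite eq_sym.
    rewrite sum_nat_const card_neq.
    have := ltn_ord k; case: (p.[x k] != 0) => /= ?; lia.

move/eqP: hq; rewrite subr_eq0 => /eqP hp; rewrite {1}hp.
rewrite horner_sum; apply: eq_bigr => k _.
rewrite hornerM hornerC horner_prod; congr (_ * _); apply: eq_bigr => l _.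
by rewrite hornerM hornerC hornerXsubC mulrC.
Qed.
End S.
Section S.
Variable R : fieldType.

Lemma lagH (n : nat) (x : nat -> R) :
  (forall i j, (i < n)%N -> (j < n)%N -> i <> j -> x i <> x j) ->
  forall (p : {poly R}), (size p <= n)%N -> forall c, c != 0 ->
  \sum_(k < n) p.[x k] * \prod_(l < n | l != k :> nat) ((1 - c * x l) / (x l - x k))
  = (- c) ^+ n.-1 * p.[c^-1].
Proof.
move=> hx p sp c hc; rewrite (lag hx sp c^-1) mulr_sumr; apply: eq_bigr => k _.
rewrite mulrCA; congr (_ * _); rewrite -(prod_const_neq k) -big_split /=.
apply: eq_bigr => l hl.
have hlk : x l - x k != 0.
  rewrite subr_eq0; apply/eqP; apply: hx => //; apply/eqP; done.
have hkl : x k - x l != 0 by rewrite -opprB oppr_eq0.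
by field; apply/and3P; split.
Qed.

Lemma prod_neq (n : nat) (j : 'I_n) (F : 'I_n -> R) :
  \prod_(m < n) F m = F j * \prod_(m < n | m != j :> nat) F m.
Proof. by rewrite (bigD1 j) //=; congr (_ * _); apply: eq_bigl => m; rewrite val_eqE. Qed.

Lemma eval_fpoly (n : nat) (Pr : pred 'I_n) (ka : nat -> R) w :
  (forall m : 'I_n, ka m != 0) ->
  (\prod_(m < n | Pr m) ((- ka m)%:P * ('X - (ka m)^-1%:P))).[w]
  = \prod_(m < n | Pr m) (1 - ka m * w).
Proof.
move=> hk; rewrite horner_prod; apply: eq_bigr => m _.
rewrite hornerM hornerC hornerXsubC; have := hk m => h; by field.
Qed.

Lemma size_fpoly (n : nat) (Pr : pred 'I_n) (ka : nat -> R) :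
  (forall m : 'I_n, ka m != 0) ->
  size (\prod_(m < n | Pr m) ((- ka m)%:P * ('X - (ka m)^-1%:P))) = (#|Pr|).+1.
Proof.
move=> hk; rewrite size_prod; last first.
  by move=> m _; rewrite mulf_eq0 polyXsubC_eq0 orbF polyC_eq0 oppr_eq0.
rewrite (eq_bigr (fun=> 2%N)); last first.
  by move=> m _; rewrite size_Cmul ?size_XsubC // oppr_eq0.
by rewrite sum_nat_const muln2 -addnn -addSn addnK.
Qed.
End S.
Section S.
Variable R : fieldType.

Lemma partA (P : nat) (om be ka : nat -> R) :
  (forall i j, (i < P)%N -> (j < P)%N -> i <> j -> om i <> om j) ->
  (forall i, (i < P)%N -> be i <> 0) ->
  (forall i j, (i < P)%N -> (j < P)%N -> i <> j -> ka i <> ka j) ->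
  (forall i, (i < P)%N -> ka i <> 0) ->
  (forall i j, (i < P)%N -> (j < P)%N -> 1 - ka i * om j <> 0) ->
  matA P om be ka *m invA P om be ka = 1%:M.
Proof.
move=> hom hbe hka hka0 h1.
have hk : forall m : 'I_P, ka m != 0 by move=> m; apply/eqP/hka0.
apply/matrixP => i j; rewrite !mxE.
under eq_bigr => k _ do rewrite !mxE.
pose D := \prod_(m < P | m != j :> nat) (ka m - ka j).
have hD : D != 0.
  apply/prodf_neq0 => m hm; rewrite subr_eq0; apply/eqP/hka => //.
  by move=> e; move/eqP: hm; apply.
pose p := \prod_(m < P | m != i :> nat) ((- ka m)%:P * ('X - (ka m)^-1%:P)).
pose L (k : 'I_P) := \prod_(l < P | l != k :> nat) ((1 - ka j * om l) / (om l - om k)).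
transitivity (\sum_(k < P) ka i / ka j / D * (p.[om k] * L k)).
  apply: eq_bigr => k _.
  rewrite /p eval_fpoly // prodf_div -/D -/(L k).
  have e := prod_neq i (fun m : 'I_P => 1 - ka m * om k).
  rewrite (prod_neq j) in e.
  have hi : 1 - ka i * om k != 0 by apply/eqP/h1.
  have hj : ka j != 0 := hk j.
  have hb : be k != 0 by apply/eqP/hbe.
  set Pj := \prod_(m < P | m != j :> nat) _ in e *.
  set Pi := \prod_(m < P | m != i :> nat) _ in e *.
  have -> : Pi = (1 - ka j * om k) * Pj / (1 - ka i * om k).
    by rewrite e [_ * Pi]mulrC mulfK.
  by field; rewrite hi hD hj hb.
rewrite -big_distrr /= /L.
rewrite (lagH hom) ?hk //; last first.
  rewrite /p size_fpoly // (eq_card (B:=[pred m : 'I_P | m != i :> nat])) // card_neq; have := ltn_ord i; lia.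
rewrite /p eval_fpoly //.
have [eij|hij] := eqVneq i j.
  subst j; rewrite -(prod_const_neq i) -big_split /=.
  rewrite (eq_bigr (fun m : 'I_P => ka m - ka i)); last first.
    by move=> m _; have := hk i => ?; field.
  rewrite -/D. have := hk i => ?. by field; apply/andP; split.
rewrite (bigD1 j) /=; last by rewrite val_eqE eq_sym.
rewrite mulfV ?hk // subrr mul0r mulr0 mulr0.
by rewrite ?(negPf hij).
Qed.
End S.
Section S.
Variable R : fieldType.

Lemma partB (Q : nat) (om ka : nat -> R) :
  (0 < Q)%N ->
  (forall i j, (i < Q.+1)%N -> (j < Q.+1)%N -> i <> j -> om i <> om j) ->
  om Q <> 0 ->
  (forall i j, (i < Q.+1)%N -> (j < Q.+1)%N -> i <> j -> ka i <> ka j) ->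
  (forall i, (i < Q.+1)%N -> ka i <> 0) ->
  (forall i j, (i < Q.+1)%N -> (j < Q.+1)%N -> 1 - ka i * om j <> 0) ->
  matB Q.+1 om ka *m invB Q.+1 om ka = 1%:M.
Proof.
move=> hQ hom hoQ hka hka0 h1.
have hk : forall m : 'I_Q, ka m != 0.
  by move=> m; apply/eqP/hka0; apply: (leq_trans (ltn_ord m)).
apply/matrixP => i j; rewrite !mxE.
under eq_bigr => k _ do rewrite !mxE.
have hQ1 : forall m : 'I_Q, (m < Q.+1)%N by move=> m; apply: (leq_trans (ltn_ord m)).
pose D := \prod_(m < Q | m != j :> nat) (ka m - ka j).
have hD : D != 0.
  apply/prodf_neq0 => m hm; rewrite subr_eq0; apply/eqP/hka => //.
  by move=> e; move/eqP: hm; apply.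
have hjQ : 1 - ka j * om Q != 0 by apply/eqP/h1.
pose p := ((om Q)%:P - 'X) * \prod_(m < Q | m != i :> nat) ((- ka m)%:P * ('X - (ka m)^-1%:P)).
have hp : forall w, p.[w] = (om Q - w) * \prod_(m < Q | m != i :> nat) (1 - ka m * w).
  by move=> w; rewrite /p hornerM eval_fpoly // hornerD hornerN hornerC hornerX.
pose L (k : 'I_Q.+1) := \prod_(l < Q.+1 | l != k :> nat) ((1 - ka j * om l) / (om l - om k)).
pose C := ((1 - ka j * om Q) * D)^-1.
transitivity (\sum_(k < Q.+1) C * (p.[om k] * L k)).
  rewrite big_ord_recr /= [p.[om Q]]hp subrr !mul0r mulr0 addr0.
  apply: eq_bigr => k _.
  rewrite hp prodf_div -/D.
  have e := prod_neq i (fun m : 'I_Q => 1 - ka m * om k).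
  rewrite (prod_neq j) in e.
  have hi : 1 - ka i * om k != 0 by apply/eqP/h1.
  have hj : ka j != 0 := hk j.
  set Pj := \prod_(m < Q | m != j :> nat) _ in e *.
  set Pi := \prod_(m < Q | m != i :> nat) _ in e *.
  have -> : Pi = (1 - ka j * om k) * Pj / (1 - ka i * om k).
    by rewrite e [_ * Pi]mulrC mulfK.
  rewrite /C /L /=.
  have hQ0 : om Q != 0 by apply/eqP.
  by field; rewrite hi hD hjQ hQ0.
rewrite -big_distrr /= /L.
rewrite (lagH hom) ?hk //; last first.
  rewrite /p (leq_trans (size_mul_leq _ _)) //.
  rewrite -opprB size_opp size_XsubC size_fpoly //.
  rewrite (eq_card (B:=[pred m : 'I_Q | m != i :> nat])) // card_neq; lia.
rewrite hp /=.
have [eij|hij] := eqVneq i j.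
  subst j.
  have eQ : (- ka i) ^+ Q = (- ka i) * (- ka i) ^+ Q.-1 by rewrite -exprS prednK.
  rewrite eQ -(prod_const_neq i).
  have hi0 := hk i.
  set A := \prod_(m < Q | m != i :> nat) (- ka i).
  set B := \prod_(m < Q | m != i :> nat) (1 - ka m / ka i).
  have ep : A * B = D.
    rewrite /A /B -big_split /=; apply: eq_bigr => m _; by field.
  have hA : A != 0 by apply/prodf_neq0 => m _; rewrite oppr_eq0.
  have -> : B = D / A by rewrite -ep [A * B]mulrC mulfK.
  rewrite /C -[true%:R]/(1 : R); by field; rewrite hA hjQ hD hi0.
rewrite (bigD1 j) /=; last by rewrite val_eqE eq_sym.
rewrite mulfV ?hk // subrr mul0r !mulr0.
by rewrite ?(negPf hij).
Qed.
End S.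

Lemma inv_of (R : fieldType) (n : nat) (A B : 'M[R]_n) :
  A *m B = 1%:M -> A \in unitmx /\ invmx A = B.
Proof.
move=> h; have [u _] := mulmx1_unit h; split => //.
by rewrite -[invmx A]mulmx1 -h mulmxA mulVmx // mul1mx.
Qed.

Theorem lemma1 (R : realFieldType) (P : nat) (om be ka : nat -> R) :
  (2 <= P)%N ->
  (forall i j, (i < P)%N -> (j < P)%N -> i <> j -> om i <> om j) ->
  (forall i, (i < P)%N -> om i <> 0) ->
  (forall i, (i < P)%N -> be i <> 0) ->
  (forall i j, (i < P)%N -> (j < P)%N -> i <> j -> ka i <> ka j) ->
  (forall i, (i < P)%N -> ka i <> 0) ->
  (forall i j, (i < P)%N -> (j < P)%N -> 1 - ka i * om j <> 0) ->
  (matA P om be ka \in unitmx /\ invmx (matA P om be ka) = invA P om be ka) /\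
  (matB P om ka \in unitmx /\ invmx (matB P om ka) = invB P om ka).
Proof.
move=> hP hom hom0 hbe hka hka0 h1; split.
  by apply: inv_of; apply: partA.
case: P hP hom hom0 hbe hka hka0 h1 => [//|Q] hP hom hom0 hbe hka hka0 h1.
apply: inv_of; apply: partB => //.
by apply: hom0.
Qed.
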